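(* Let $\mathbb{R}^{2n}$ have coordinates $(x_1,y_1,\dots,x_n,y_n)$. For a symplectic form $\omega = \sum_{i=1}^n f_i(x_i,y_i)\,dx_i\wedge dy_i$ with $f_i:\mathbb{R}^2\to\mathbb{R}$ smooth and nowhere vanishing, define for $x\in\mathbb{R}^{2n}$: $m_\omega(x) = \min\{f_i(x_i,y_i) : 1\le i\le n\}$ and $M_\omega(x) = \max\{f_i(x_i,y_i) : 1\le i\le n\}$. Let $\omega_1 = \sum_{i=1}^n f_i(x_i,y_i)\,dx_i\wedge dy_i$ and $\omega_2 = \sum_{i=1}^n g_i(x_i,y_i)\,dx_i\wedge dy_i$ be two such forms (all $f_i,g_i$ smooth and nowhere vanishing). If $\omega_1$ and $\omega_2$ are $\omega_{\mathrm{std}}$-symplectomorphic, then $\inf_{x}m_{\omega_1}(x) = \inf_x m_{\omega_2}(x)$, $\sup_x m_{\omega_1}(x) = \sup_x m_{\omega_2}(x)$, $\inf_x M_{\omega_1}(x) = \inf_x M_{\omega_2}(x)$, and $\sup_x M_{\omega_1}(x) = \sup_x M_{\omega_2}(x)$, where $x$ ranges over $\mathbb{R}^{2n}$ (values in the extended reals).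
   Context: $\omega_{\mathrm{std}} = \sum_{i=1}^n dx_i\wedge dy_i$. $\operatorname{Symp}(\mathbb{R}^{2n},\omega_{\mathrm{std}})$ is the set of diffeomorphisms $\varphi$ of $\mathbb{R}^{2n}$ with $\varphi^*\omega_{\mathrm{std}} = \omega_{\mathrm{std}}$, where $(\varphi^*\omega)(x)(v,w) = \omega(\varphi(x))(d\varphi_x v, d\varphi_x w)$. Symplectic forms $\omega_1,\omega_2$ are $\omega_{\mathrm{std}}$-symplectomorphic if there is $\varphi\in\operatorname{Symp}(\mathbb{R}^{2n},\omega_{\mathrm{std}})$ with $\varphi^*\omega_1 = \omega_2$. *)

(* Defs.v *)
From HB Require Import structures.
From mathcomp Require Import all_boot all_order all_algebra.
From mathcomp Require Import all_classical all_reals all_analysis.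
Set Implicit Arguments. Unset Strict Implicit. Unset Printing Implicit Defensive.
Import Order.TTheory GRing.Theory Num.Theory.
Import numFieldNormedType.Exports.
Local Open Scope classical_set_scope.
Local Open Scope ring_scope.

Definition iterD {R : realType} {V W : normedModType R} (vs : seq V)
  (f : V -> W) : V -> W :=
  foldr (fun v g => fun x => derive g x v) f vs.

Definition smooth {R : realType} {V W : normedModType R} (f : V -> W) : Prop :=
  forall vs : seq V, continuous (iterD vs f) /\
    (forall (v x : V), derivable (iterD vs f) x v).

Definition diffeo {R : realType} {V : normedModType R} (phi : V -> V) : Prop :=
  smooth phi /\ exists psi : V -> V, [/\ smooth psi, cancel phi psi & cancel psi phi].

(* R^{2n} is 'rV[R]_(n + n): the coordinate x_i is entry (lshift n i),
   the coordinate y_i is entry (rshift n i). *)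
Definition xc {R : realType} {n : nat} (p : 'rV[R]_(n + n)) (i : 'I_n) : R :=
  p 0 (lshift n i).
Definition yc {R : realType} {n : nat} (p : 'rV[R]_(n + n)) (i : 'I_n) : R :=
  p 0 (rshift n i).

(* A (pointwise) 2-form on R^{2n}: point -> vector -> vector -> R. *)
Definition form2 (R : realType) (n : nat) :=
  'rV[R]_(n + n) -> 'rV[R]_(n + n) -> 'rV[R]_(n + n) -> R.

Definition split_form {R : realType} {n : nat} (f : 'I_n -> R * R -> R) : form2 R n :=
  fun p v w => \sum_(i < n) f i (xc p i, yc p i) * (xc v i * yc w i - yc v i * xc w i).

Definition omega_std {R : realType} {n : nat} : form2 R n :=
  split_form (fun _ _ => 1).

Definition pullback {R : realType} {n : nat} (phi : 'rV[R]_(n + n) -> 'rV[R]_(n + n))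
  (om : form2 R n) : form2 R n :=
  fun p v w => om (phi p) ('D_v phi p) ('D_w phi p).

Definition symp_std {R : realType} {n : nat} (phi : 'rV[R]_(n + n) -> 'rV[R]_(n + n)) :=
  diffeo phi /\ pullback phi omega_std = omega_std.

Definition std_symplectomorphic {R : realType} {n : nat} (om1 om2 : form2 R n) :=
  exists phi, symp_std phi /\ pullback phi om1 = om2.

Definition m_om {R : realType} {n : nat} (f : 'I_n -> R * R -> R)
  (p : 'rV[R]_(n + n)) : \bar R :=
  \big[Order.min/+oo%E]_(i < n) (f i (xc p i, yc p i))%:E.
Definition M_om {R : realType} {n : nat} (f : 'I_n -> R * R -> R)
  (p : 'rV[R]_(n + n)) : \bar R :=
  \big[Order.max/-oo%E]_(i < n) (f i (xc p i, yc p i))%:E.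

Definition admissible {R : realType} {n : nat} (f : 'I_n -> R * R -> R) :=
  forall i, smooth (f i) /\ forall q, f i q != 0.

(* Main.v *)
Require Import Defs.
From HB Require Import structures.
From mathcomp Require Import all_boot all_order all_algebra.
From mathcomp Require Import all_classical all_reals all_analysis.
Import Order.TTheory GRing.Theory Num.Theory.
Import numFieldNormedType.Exports.
Local Open Scope classical_set_scope.
Local Open Scope ring_scope.

Lemma mulT_entry (R : comPzRingType) m k (M : 'M[R]_(1, m)) (B : 'M[R]_(k, m)) (i : 'I_k) :
  (M *m B^T) 0 i = (M *m (row i B)^T) 0 0.
Proof. by rewrite !mxE; apply: eq_bigr => j _; rewrite !mxE. Qed.

Lemma mul_delta_entry (R : comPzRingType) m (M : 'M[R]_(1, m)) (i : 'I_m) :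
  (M *m (delta_mx 0 i : 'rV_m)^T) 0 0 = M 0 i.
Proof.
rewrite trmx_delta mxE (bigD1 i) //= big1 ?addr0; first by rewrite mxE !eqxx mulr1.
by move=> j /negbTE ji; rewrite mxE ji mulr0.
Qed.

Lemma core {R : fieldType} {m} {J : 'M[R]_m} {T : 'rV[R]_m -> 'rV[R]_m} :
  J *m J = - 1%:M ->
  (forall v w, (T v *m J *m (T w)^T) 0 0 = (v *m J *m w^T) 0 0) ->
  exists A, A \in unitmx /\ forall v, T v = v *m A.
Proof.
move=> JJ HT.
pose A : 'M[R]_m := \matrix_i T (delta_mx 0 i).
have C v : T v *m J *m A^T = v *m J.
  apply/rowP => k; rewrite mulT_entry rowK HT.
  by rewrite mul_delta_entry.
have AJA : A *m J *m A^T = J.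
  by apply/row_matrixP => i; rewrite !row_mul rowK C rowE.
have AB : A *m (J *m A^T *m (- J)) = 1%:M.
  by rewrite !mulmxA AJA mulmxN JJ opprK.
have [Au _] := mulmx1_unit AB.
exists A; split => // v.
have BA := mulmx1C AB.
by rewrite -[T v]mulmx1 -BA !mulmxA C mulmxN -(mulmxA v) JJ !mulmxN mulmx1 opprK.

Qed.
Definition Jm (R : realType) n : 'M[R]_(n + n) := block_mx 0 1%:M (- 1%:M) 0.

Lemma JJ (R : realType) n : Jm R n *m Jm R n = - 1%:M.
Proof.
rewrite /Jm mulmx_block !mulmx0 !mul0mx !mulmx1 !mul1mx !addr0 !add0r.
rewrite [in RHS](scalar_mx_block n n 1) opp_block_mx oppr0.
reflexivity.
Qed.

Lemma omega_stdE {R : realType} {n} (q v w : 'rV[R]_(n + n)) :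
  omega_std q v w = (v *m Jm R n *m w^T) 0 0.
Proof.
have -> : v *m Jm R n = row_mx (- rsubmx v) (lsubmx v).
  by rewrite -{1}[v]hsubmxK /Jm mul_row_block !mulmx0 !mulmx1 !mulmxN add0r addr0 mulmx1.
have -> : w^T = (row_mx (lsubmx w) (rsubmx w))^T by rewrite hsubmxK.
rewrite tr_row_mx mul_row_col mxE !mxE /omega_std /split_form.
rewrite addrC -big_split /=; apply: eq_bigr => i _; rewrite !mxE /xc /yc mul1r.
by rewrite mulNr.
Qed.

Definition ex_ (R : realType) {n} (i : 'I_n) : 'rV[R]_(n + n) := delta_mx 0 (lshift n i).
Definition ey_ (R : realType) {n} (i : 'I_n) : 'rV[R]_(n + n) := delta_mx 0 (rshift n i).

Lemma xc_ex (R : realType) n (i j : 'I_n) : xc (ex_ R i) j = (j == i)%:R.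
Proof. by rewrite /xc mxE eqxx eq_lshift. Qed.
Lemma yc_ex (R : realType) n (i j : 'I_n) : yc (ex_ R i) j = 0.
Proof. by rewrite /yc mxE eq_rlshift andbF. Qed.
Lemma xc_ey (R : realType) n (i j : 'I_n) : xc (ey_ R i) j = 0.
Proof. by rewrite /xc mxE eq_lrshift andbF. Qed.
Lemma yc_ey (R : realType) n (i j : 'I_n) : yc (ey_ R i) j = (j == i)%:R.
Proof. by rewrite /yc mxE eqxx eq_rshift. Qed.

Lemma sum_ey (R : realType) n (i : 'I_n) (F a b : 'I_n -> R) :
  \sum_j F j * (a j * yc (ey_ R i) j - b j * xc (ey_ R i) j) = F i * a i.
Proof.
rewrite (bigD1 i) //= big1 => [|j ne]; first by rewrite yc_ey xc_ey eqxx mulr0 subr0 mulr1 addr0.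
by rewrite yc_ey xc_ey (negbTE ne) !mulr0 subr0 mulr0.
Qed.
Lemma sum_ex (R : realType) n (i : 'I_n) (F a b : 'I_n -> R) :
  \sum_j F j * (a j * yc (ex_ R i) j - b j * xc (ex_ R i) j) = F i * (- b i).
Proof.
rewrite (bigD1 i) //= big1 => [|j ne]; first by rewrite yc_ex xc_ex eqxx mulr0 sub0r mulr1 addr0.
by rewrite yc_ex xc_ex (negbTE ne) !mulr0 subr0 mulr0.
Qed.

Definition ev {R : realType} {n} (h : 'I_n -> R * R -> R) (q : 'rV[R]_(n + n)) (l : R) :=
  exists i, h i (xc q i, yc q i) = l.

Lemma evP (R : realType) n (h : 'I_n -> R * R -> R) q l :
  ev h q l <-> exists v, v != 0 /\ forall w, split_form h q v w = l * omega_std q v w.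
Proof.
split => [[i hi]|[v [v0 Hv]]].
  exists (ex_ R i); split.
    apply/eqP => /matrixP /(_ 0 (lshift n i)); rewrite !mxE !eqxx /=.
    by move/eqP; rewrite oner_eq0.
  move=> w; rewrite /omega_std /split_form mulr_sumr; apply: eq_bigr => j _.
  rewrite xc_ex yc_ex mul1r; case: (eqVneq j i) => [->|ne]; first by rewrite hi.
  by rewrite mul0r sub0r mul0r oppr0 !mulr0.
have [k vk] : exists k, v 0 k != 0.
  apply/not_existsP => H; move/eqP: v0; apply; apply/matrixP => a b.
  rewrite (ord1 a) mxE; have := H b; by move/negP; rewrite negbK => /eqP.
move: vk; rewrite -(splitK k); case: (fintype.split k) => i /= vi.
  have := Hv (ey_ R i); rewrite /omega_std /split_form !sum_ey mul1r => E.
  by exists i; apply: (mulIf vi).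
have := Hv (ex_ R i); rewrite /omega_std /split_form !sum_ex mul1r => E.
exists i; apply: (mulIf (x := - yc v i)); last by [].
by rewrite oppr_eq0.
Qed.

Lemma bigmin_eq (R : realType) n (F G : 'I_n -> \bar R) :
  (forall j, exists i, G j = F i) -> (forall i, exists j, F i = G j) ->
  \big[Order.min/+oo%E]_i F i = \big[Order.min/+oo%E]_i G i.
Proof.
move=> HG HF; apply/le_anti/andP; split; apply: le_bigmin => //; try exact: leey.
  by move=> j _; have [i ->] := HG j; exact: bigmin_le.
by move=> i _; have [j ->] := HF i; exact: bigmin_le.
Qed.

Lemma bigmax_eq (R : realType) n (F G : 'I_n -> \bar R) :
  (forall j, exists i, G j = F i) -> (forall i, exists j, F i = G j) ->
  \big[Order.max/-oo%E]_i F i = \big[Order.max/-oo%E]_i G i.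
Proof.
move=> HG HF; apply/le_anti/andP; split; apply: bigmax_le => //; try exact: leNye.
  by move=> i _; have [j ->] := HF i; exact: le_bigmax.
by move=> j _; have [i ->] := HG j; exact: le_bigmax.
Qed.

Theorem theorem2p6 (R : realType) (n : nat) (f g : 'I_n -> R * R -> R) :
  admissible f -> admissible g ->
  std_symplectomorphic (split_form f) (split_form g) ->
  [/\ ereal_inf (range (m_om f)) = ereal_inf (range (m_om g)),
      ereal_sup (range (m_om f)) = ereal_sup (range (m_om g)),
      ereal_inf (range (M_om f)) = ereal_inf (range (M_om g))
    & ereal_sup (range (M_om f)) = ereal_sup (range (M_om g))].
Proof.
move=> _ _ [phi [[[_ [psi [_ K1 K2]]] Hstd] Hpb]].
have key p l : ev g p l <-> ev f (phi p) l.
  pose T v := 'D_v phi p.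
  have HS v w : omega_std (phi p) (T v) (T w) = omega_std p v w.
    exact: (congr1 (fun F => F p v w) Hstd).
  have H12 v w : split_form f (phi p) (T v) (T w) = split_form g p v w.
    exact: (congr1 (fun F => F p v w) Hpb).
  have [A [Au TA]] : exists A, A \in unitmx /\ forall v, T v = v *m A.
    apply: (core (JJ R n)) => v w.
    by rewrite -(omega_stdE (phi p)) -(omega_stdE p) HS.
  rewrite !evP; split => [[v [v0 Hv]]|[u [u0 Hu]]].
    exists (T v); split.
      rewrite TA; apply: contra v0 => /eqP h.
      by rewrite -[v]mulmx1 -(mulmxV Au) mulmxA h mul0mx.
    move=> w'; have -> : w' = T (w' *m invmx A) by rewrite TA mulmxKV.
    by rewrite H12 Hv HS.
  have Tu : T (u *m invmx A) = u by rewrite TA mulmxKV.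
  exists (u *m invmx A); split.
    by apply: contra u0 => /eqP h; rewrite -Tu h TA mul0mx.
  by move=> w; rewrite -H12 -HS Tu; exact: Hu.
have em p : m_om g p = m_om f (phi p).
  apply: bigmin_eq => [j|i].
    by have [i <-] := (key p (f j (xc (phi p) j, yc (phi p) j))).2 (ex_intro _ j erefl); exists i.
  by have [j <-] := (key p (g i (xc p i, yc p i))).1 (ex_intro _ i erefl); exists j.
have eM p : M_om g p = M_om f (phi p).
  apply: bigmax_eq => [j|i].
    by have [i <-] := (key p (f j (xc (phi p) j, yc (phi p) j))).2 (ex_intro _ j erefl); exists i.
  by have [j <-] := (key p (g i (xc p i, yc p i))).1 (ex_intro _ i erefl); exists j.
have Rm : range (m_om f) = range (m_om g).
  apply/seteqP; split => x [p _ <-].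
    by exists (psi p) => //; rewrite em K2.
  by exists (phi p) => //; rewrite em.
have RM : range (M_om f) = range (M_om g).
  apply/seteqP; split => x [p _ <-].
    by exists (psi p) => //; rewrite eM K2.
  by exists (phi p) => //; rewrite eM.
by rewrite Rm RM.
Qed.
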